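(* Let $n > m\ge 1$ be integers with $n\ge 2m$, let $\mathbb{S}\subseteq\mathbb{R}$, and let $f:\mathbb{S}\to\mathbb{R}^n$ be a function. Let $U=\begin{bmatrix}U_1 & U_2\end{bmatrix}\in\mathbb{R}^{n\times n}$ be an orthogonal matrix with $U_1\in\mathbb{R}^{n\times m}$, $U_2\in\mathbb{R}^{n\times(n-m)}$, whose columns form a complete basis of the range of $f(\mu)$ for all $\mu\in\mathbb{S}$. Let $P\in\mathbb{R}^{n\times m}$ be a selection operator such that $P^TU_1$ is invertible, and let $\sigma_1\ge\cdots\ge\sigma_m>0$ be the singular values of $P^TU_1$. Let $\mu_1,\dots,\mu_N\in\mathbb{S}$, $f_i:=f(\mu_i)$, $\tilde f_i:=U_1(P^TU_1)^{-1}P^Tf_i$, $\hat f_i:=U_1U_1^Tf_i$, and $X:=U_2^T\begin{bmatrix} f_1 & f_2 & \cdots & f_N\end{bmatrix}\in\mathbb{R}^{(n-m)\times N}$. Let $\lambda_1(XX^T)\ge\lambda_2(XX^T)\ge\cdots\ge\lambda_{n-m}(XX^T)\ge0$ be the eigenvalues of $XX^T$. Then $$\frac1N\sum_{i=1}^N\lVert\tilde f_i-\hat f_i\rVert_2^2\le\frac1N\sum_{i=1}^m\left(\sigma_{m-i+1}^{-2}-1\right)\lambda_i(XX^T).$$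
   Context: A selection (mask) operator $P\in\mathbb{R}^{n\times m}$ is a matrix whose columns are $m$ distinct columns of the identity matrix $\mathbb{I}_n$. $\lVert\cdot\rVert_2$ is the Euclidean norm. *)

(* Defs.v *)
From HB Require Import structures.
From mathcomp Require Import all_boot all_order all_algebra.
Set Implicit Arguments. Unset Strict Implicit. Unset Printing Implicit Defensive.
Import Order.TTheory GRing.Theory Num.Theory.
Local Open Scope ring_scope.

Definition selection_op (R : nzRingType) (n m : nat) (P : 'M[R]_(n, m)) : Prop :=
  exists s : 'I_m -> 'I_n, injective s /\ P = \matrix_(i, j) (i == s j)%:R.

Definition orthogonal_mx (R : nzRingType) (n k : nat) (U : 'M[R]_(n, k)) : Prop :=
  U^T *m U = 1%:M /\ U *m U^T = 1%:M.

(* lam is the list of the eigenvalues of the square matrix A, counted with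
   algebraic multiplicity (i.e. the roots of its characteristic polynomial),
   sorted in nonincreasing order. *)
Definition eigvals_desc (R : rcfType) (k : nat) (A : 'M[R]_k) (lam : seq R) : Prop :=
  size lam = k /\ sorted >=%R lam /\
  char_poly A = \prod_(x <- lam) ('X - x%:P).

(* sigma is the list of singular values of M (nonnegative square roots of the
   eigenvalues of M^T M), sorted in nonincreasing order. *)
Definition singvals_desc (R : rcfType) (k : nat) (M : 'M[R]_k) (sigma : seq R) : Prop :=
  size sigma = k /\ sorted >=%R sigma /\ all (fun s => 0 <= s) sigma /\
  char_poly (M^T *m M) = \prod_(s <- sigma) ('X - (s ^+ 2)%:P).

Definition norm2sq (R : rcfType) (k : nat) (v : 'cV[R]_k) : R :=
  \sum_(j < k) v j 0 ^+ 2.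

(* Main.v *)
Require Import Defs.
From HB Require Import structures.
From mathcomp Require Import all_boot all_order all_algebra.
From mathcomp Require Import ring lra zify.
Set Implicit Arguments. Unset Strict Implicit. Unset Printing Implicit Defensive.
Import Order.TTheory GRing.Theory Num.Theory.
Local Open Scope ring_scope.

Lemma abel_aux (R : realDomainType) (m : nat) (e w : nat -> R) :
  (forall i j, (i <= j < m)%N -> e j <= e i) ->
  (forall a, (a < m)%N -> 0 <= \sum_(j < a.+1) w j) ->
  forall a, (a < m)%N -> e a * \sum_(j < a.+1) w j <= \sum_(j < a.+1) e j * w j.
Proof.
move=> he hw; elim=> [|a IH] ha.
  by rewrite !big_ord_recr !big_ord0 /= !add0r.
rewrite [X in _ <= X]big_ord_recr /= [X in _ * X]big_ord_recr /= mulrDr.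
rewrite lerD2r; apply: le_trans (IH (ltnW ha)).
rewrite ler_wpM2r ?hw ?(ltnW ha) //; by apply: he; rewrite leqnSn ha.
Qed.

Lemma abel (R : realDomainType) (m : nat) (e y l : nat -> R) :
  (forall i j, (i <= j < m)%N -> e j <= e i) ->
  (forall i, (i < m)%N -> 0 <= e i) ->
  (forall a, (a < m)%N -> \sum_(j < a.+1) y j <= \sum_(j < a.+1) l j) ->
  \sum_(j < m) e j * y j <= \sum_(j < m) e j * l j.
Proof.
move=> he he0 hyl; case: m he he0 hyl => [|m] he he0 hyl; first by rewrite !big_ord0.
rewrite -subr_ge0 -sumrB.
have -> : \sum_(i < m.+1) (e i * l i - e i * y i) = \sum_(i < m.+1) e i * (l i - y i).
  by apply: eq_bigr => i _; rewrite mulrBr.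
have hw : forall a, (a < m.+1)%N -> 0 <= \sum_(j < a.+1) (l j - y j).
  by move=> a ha; rewrite sumrB subr_ge0 hyl.
have h := @abel_aux R m.+1 e (fun j => l j - y j) he hw m (ltnSn m).
apply: le_trans h; by rewrite mulr_ge0 ?he0 ?hw.
Qed.

Lemma fan (R : realDomainType) (P a : nat) (p : 'I_P -> R) (l : nat -> R) :
  (a < P)%N ->
  (forall i j, (i <= j < P)%N -> l j <= l i) ->
  (forall i, (i < P)%N -> 0 <= l i) ->
  (forall i : 'I_P, 0 <= p i <= 1) ->
  \sum_(i < P) p i <= a.+1%:R ->
  \sum_(i < P) p i * l i <= \sum_(i < a.+1) l i.
Proof.
move=> haP hl hl0 hp hsum.
rewrite (big_ord_widen P l haP) big_mkcond /=.
have step : forall i : 'I_P, p i * l i - (if (i < a.+1)%N then l i else 0)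
     <= l a * (p i - (if (i < a.+1)%N then 1 else 0)).
  move=> i; have /andP[p0 p1] := hp i.
  case: ifP => hi.
    rewrite -subr_ge0.
    have -> : l a * (p i - 1) - (p i * l i - l i) = (1 - p i) * (l i - l a) by ring.
    by rewrite mulr_ge0 // subr_ge0 // hl // -ltnS hi.
  rewrite !subr0 [l a * _]mulrC ler_wpM2l //; apply: hl; rewrite ltn_ord andbT.
  by move/negbT: hi; rewrite -leqNgt => /ltnW.
rewrite -subr_le0 [X in _ - X]big_mkcond -sumrB /=.
apply: le_trans (ler_sum _ (fun i _ => step i)) _.
rewrite -mulr_sumr sumrB -big_mkcond /= -(big_ord_widen P (fun _ => 1) haP).
rewrite sumr_const card_ord.
by rewrite mulr_ge0_le0 ?hl0 // subr_le0.
Qed.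


Lemma bessel (R : realFieldType) m p (Z : 'M[R]_(m,p)) (e : 'I_m -> R) (k : 'I_p) :
  Z *m Z^T = diag_mx (\row_j e j) ->
  \sum_(j < m) Z j k ^+ 2 / e j <= 1.
Proof.
move=> hZ.
set t : 'rV_m := \row_j (Z j k / e j).
set u := t *m Z.
pose d : 'rV[R]_p := delta_mx 0 k.
set S := \sum_(j < m) Z j k ^+ 2 / e j.
have h0 : 0 <= ((d - u) *m (d - u)^T) 0 0.
  rewrite mxE; apply: sumr_ge0 => l _; rewrite !mxE -expr2; exact: sqr_ge0.
have hdd : (d *m d^T) 0 0 = 1 by rewrite trmx_delta mul_delta_mx mxE !eqxx.
have hud : (u *m d^T) 0 0 = S.
  rewrite trmx_delta -colE mxE /u mxE; apply: eq_bigr => j _; rewrite mxE; ring.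
have hdu : (d *m u^T) 0 0 = S.
  by rewrite -[d]trmxK -trmx_mul mxE.
have huu : (u *m u^T) 0 0 = S.
  rewrite /u trmx_mul mulmxA -[t *m Z *m _]mulmxA hZ mul_mx_diag mxE.
  apply: eq_bigr => j _; rewrite !mxE.
  have [->|ej] := eqVneq (e j) 0; first by rewrite invr0 !(mulr0, mul0r).
  by field.
move: h0; rewrite linearB /= mulmxBl !mulmxBr.
have addE (A B : 'M[R]_1) : (A + B) 0 0 = A 0 0 + B 0 0 by rewrite mxE.
have oppE (A : 'M[R]_1) : (- A) 0 0 = - A 0 0 by rewrite mxE.
rewrite !(addE, oppE) hdd hud hdu huu; lra.
Qed.


Lemma key (R : realFieldType) m p (Z : 'M[R]_(m,p)) (e l : nat -> R) :
 (m <= p)%N ->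
 Z *m Z^T = diag_mx (\row_j e j) ->
 (forall i j, (i <= j < m)%N -> e j <= e i) ->
 (forall i j, (i <= j < p)%N -> l j <= l i) -> (forall i, (i < p)%N -> 0 <= l i) ->
 \sum_(j < m) \sum_(k < p) Z j k ^+ 2 * l k <= \sum_(j < m) e j * l j.
Proof.
case: m Z => [|m] Z hmp hZ he hl hl0; first by rewrite !big_ord0.
have hZjj : forall j : 'I_m.+1, \sum_(k < p) Z j k ^+ 2 = e j.
  move=> j; have := congr1 (fun M : 'M[R]_m.+1 => M j j) hZ; rewrite !mxE eqxx mulr1n => <-.
  by apply: eq_bigr => k _; rewrite mxE expr2.
have he0 : forall i, (i < m.+1)%N -> 0 <= e i.
  move=> i hi; have := hZjj (Ordinal hi) => /= <-.
  by apply: sumr_ge0 => k _; exact: sqr_ge0.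
pose c (j : nat) (k : 'I_p) := Z (inord j) k ^+ 2 / e j.
have hc0 : forall j k, (j < m.+1)%N -> 0 <= c j k.
  by move=> j k hj; rewrite /c divr_ge0 ?sqr_ge0 ?he0.
have hZc : forall (j : 'I_m.+1) k, Z j k ^+ 2 = e j * c j k.
  move=> j k; rewrite /c inord_val; have [ej0|ej] := eqVneq (e j) 0.
    rewrite ej0 mul0r.
    have hs : \sum_(k < p) Z j k ^+ 2 = 0 by rewrite hZjj.
    exact: (psumr_eq0P (P := xpredT) (fun k _ => sqr_ge0 (Z j k)) hs).
  by rewrite mulrC divfK.
have hrow : forall j, (j < m.+1)%N -> \sum_k c j k <= 1.
  move=> j hj; rewrite /c -mulr_suml.
  have -> : e j = e (inord j : 'I_m.+1) by rewrite inordK.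
  rewrite hZjj; have [->|ej] := eqVneq (e (inord j : 'I_m.+1)) 0.
    by rewrite invr0 mulr0.
  by rewrite divff.
have hcol : forall k, \sum_(j < m.+1) c j k <= 1.
  move=> k; have := bessel (e := fun j : 'I_m.+1 => e j) k hZ.
  by apply: le_trans; rewrite le_eqVlt; apply/orP; left; apply/eqP; apply: eq_bigr => j _; rewrite /c inord_val.
pose y j := \sum_k c j k * l k.
have -> : \sum_(j < m.+1) \sum_(k < p) Z j k ^+ 2 * l k = \sum_(j < m.+1) e j * y j.
  apply: eq_bigr => j _; rewrite /y mulr_sumr; apply: eq_bigr => k _.
  by rewrite hZc mulrA.
apply: abel => //.
move=> a ha.
have -> : \sum_(j < a.+1) y j = \sum_(k < p) (\sum_(j < a.+1) c j k) * l k.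
  by rewrite /y exchange_big /=; apply: eq_bigr => k _; rewrite mulr_suml.
apply: fan => //.
- exact: leq_trans ha hmp.
- move=> k; apply/andP; split.
    by apply: sumr_ge0 => j _; apply: hc0; exact: leq_trans (ltn_ord j) ha.
  apply: le_trans (hcol k).
  rewrite (big_ord_widen m.+1 (fun j => c j k) ha).
  rewrite [X in _ <= X](bigID (fun j : 'I_m.+1 => (j < a.+1)%N)) /= lerDl.
  by apply: sumr_ge0 => j _; apply: hc0.
- rewrite exchange_big /=.
  have := ler_sum (index_enum 'I_a.+1) (fun (j : 'I_a.+1) (_ : true) => hrow j (leq_trans (ltn_ord j) ha)).
  by rewrite sumr_const card_ord.
Qed.


Lemma char_poly_orth (R : comNzRingType) k (H G : 'M[R]_k) :
  H^T *m H = 1%:M -> char_poly (H^T *m G *m H) = char_poly G.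
Proof.
move=> hH; rewrite /char_poly /char_poly_mx.
have -> : 'X%:M - map_mx polyC (H^T *m G *m H)
   = map_mx polyC H^T *m ('X%:M - map_mx polyC G) *m map_mx polyC H.
  rewrite mulmxBr mulmxBl !map_mxM; congr (_ - _).
  by rewrite scalar_mxC -mulmxA -map_mxM hH map_mx1 mulmx1.
rewrite !det_mulmx mulrC mulrA -det_mulmx -map_mxM mulrC.
by rewrite (mulmx1C hH) map_mx1 det1 mulr1.
Qed.

Lemma char_poly_block (R : comNzRingType) k (x : R) (G : 'M[R]_k) :
  char_poly (block_mx (x%:M : 'M_1) 0 0 G) = ('X - x%:P) * char_poly G.
Proof.
rewrite /char_poly /char_poly_mx map_block_mx !map_mx0 (scalar_mx_block 1 k).
rewrite opp_block_mx add_block_mx !oppr0 !addr0 det_ublock det_mx11.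
by rewrite !mxE /= mulr1n.
Qed.


Lemma householder (R : realFieldType) k (v : 'rV[R]_k.+1) :
  v *m v^T = 1%:M ->
  exists H : 'M[R]_k.+1, [/\ H^T = H, H *m H = 1%:M & delta_mx 0 0 *m H = v].
Proof.
move=> hv.
pose e0 : 'rV[R]_k.+1 := delta_mx 0 0.
have [w hwdef] : {w : 'rV[R]_k.+1 | w = v - e0} by exists (v - e0).
pose c := (w *m w^T) 0 0.
pose a := 2 / c.
have addE (A B : 'M[R]_1) : (A + B) 0 0 = A 0 0 + B 0 0 by rewrite mxE.
have oppE (A : 'M[R]_1) : (- A) 0 0 = - A 0 0 by rewrite mxE.
have hrow (u : 'rV[R]_k.+1) : (e0 *m u^T) 0 0 = u 0 0 by rewrite -rowE !mxE.
have hrow' (u : 'rV[R]_k.+1) : (u *m e0^T) 0 0 = u 0 0.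
  by rewrite -[u]trmxK -trmx_mul mxE trmxK hrow.
have hw00 : w 0 0 = v 0 0 - 1 by rewrite hwdef !mxE.
have hc : c = - 2 * w 0 0.
  rewrite hw00 /c hwdef linearB /= mulmxBl !mulmxBr !(addE, oppE) hrow hrow'.
  have -> : (v *m v^T) 0 0 = 1 by rewrite hv mxE.
  have -> : (e0 *m e0^T) 0 0 = 1 by rewrite trmx_delta mul_delta_mx mxE.
  lra.
have hww : w *m w^T = c%:M := mx11_scalar _.
exists (1%:M - a *: (w^T *m w)); split.
- by rewrite linearB /= trmx1 linearZ /= trmx_mul trmxK.
- have XX : (w^T *m w) *m (w^T *m w) = c *: (w^T *m w).
    by rewrite mulmxA -[w^T *m w *m w^T]mulmxA hww mul_mx_scalar -scalemxAl.
  rewrite mulmxBl !mulmxBr !mul1mx !mulmx1 -scalemxAl -scalemxAr XX !scalerA.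
  have E : a * a * c = a + a.
    have [c0|c0] := eqVneq c 0; first by rewrite /a c0 invr0 !mulr0 addr0.
    by rewrite /a; field.
  rewrite E scalerDl.
  by rewrite opprB addrK subrK.
- rewrite mulmxBr mulmx1 -scalemxAr mulmxA.
  rewrite [e0 *m w^T]mx11_scalar hrow mul_scalar_mx scalerA.
  have [c0|c0] := eqVneq c 0.
    have w0 : w = 0.
      apply/matrixP => i j; rewrite (ord1 i) [RHS]mxE.
      have hs : \sum_(l < k.+1) w 0 l ^+ 2 = 0.
        by rewrite -[X in _ = X]c0 /c mxE; apply: eq_bigr => l _; rewrite mxE expr2.
      have := psumr_eq0P (P := xpredT) (fun l _ => sqr_ge0 (w 0 l)) hs (i := j) isT.
      by move/eqP; rewrite sqrf_eq0 => /eqP.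
    have : v = e0 by apply/eqP; rewrite -subr_eq0 -hwdef w0.
    by move=> ->; rewrite w0 scaler0 subr0.
  have -> : a * w 0 0 = -1.
    rewrite /a; move: c0; rewrite hc => c0; field.
    by apply: contraNneq c0 => ->; rewrite mulr0.
  by rewrite scaleN1r opprK hwdef addrC subrK.
Qed.


Lemma spectral (R : rcfType) k (G : 'M[R]_k) (lam : seq R) :
  G^T = G -> size lam = k -> char_poly G = \prod_(x <- lam) ('X - x%:P) ->
  exists Q : 'M[R]_k, Q^T *m Q = 1%:M /\ Q^T *m G *m Q = diag_mx (\row_i lam`_i).
Proof.
elim: k G lam => [|k IH] G lam hG hs hc.
  by exists 1%:M; split; [rewrite trmx1 mulmx1 | apply/matrixP => i []].
case: lam hs hc => [//|x lam'] /= [hs] hc.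
have : eigenvalue G x.
  by rewrite eigenvalue_root_char hc big_cons rootM root_XsubC eqxx.
case/eigenvalueP => v0 hv0 v0n0.
set s := (v0 *m v0^T) 0 0.
have hs2 : s = \sum_(l < k.+1) v0 0 l ^+ 2.
  by rewrite /s mxE; apply: eq_bigr => l _; rewrite mxE expr2.
have s0 : 0 < s.
  rewrite lt_def hs2 sumr_ge0 ?andbT; last by move=> l _; exact: sqr_ge0.
  apply: contra v0n0 => /eqP h0; apply/eqP/matrixP => i j; rewrite (ord1 i) [RHS]mxE.
  have := psumr_eq0P (P := xpredT) (fun l _ => sqr_ge0 (v0 0 l)) h0 (i := j) isT.
  by move/eqP; rewrite sqrf_eq0 => /eqP.
pose v := (Num.sqrt s)^-1 *: v0.
have hv : v *m v^T = 1%:M.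
  rewrite [LHS]mx11_scalar; congr (_%:M).
  rewrite /v linearZ /= -scalemxAl -scalemxAr !mxE -/s.
  have hsq := sqr_sqrtr (ltW s0).
  have sq0 : Num.sqrt s != 0 by rewrite sqrtr_eq0 -ltNge.
  rewrite mulrA -invfM -expr2 hsq.
  have -> : \sum_j v0 0 j * v0^T j 0 = s by rewrite /s mxE.
  by rewrite mulVf // gt_eqF.
have hvG : v *m G = x *: v by rewrite /v -scalemxAl hv0 !scalerA mulrC.
have [H [hHT hHH he0H]] := householder hv.
have [M hMdef] : {M : 'M[R]_k.+1 | M = H *m G *m H} by exists (H *m G *m H).
have hM : M^T = M by rewrite hMdef !trmx_mul hHT hG mulmxA.
have hrow0 : (delta_mx 0 0 : 'rV[R]_k.+1) *m M = x *: delta_mx 0 0.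
  by rewrite hMdef !mulmxA he0H hvG -scalemxAl -he0H -mulmxA hHH mulmx1.
have hMentry : forall j, M 0 j = x * (j == 0)%:R.
  move=> j; have := congr1 (fun A : 'rV[R]_k.+1 => A 0 j) hrow0.
  by rewrite /= -rowE !mxE => ->; rewrite eqxx.
have hcM : char_poly M = char_poly G.
  by rewrite hMdef -{1}hHT char_poly_orth // hHT.
pose G' := drsubmx (M : 'M_(1 + k)).
have hMblock : (M : 'M_(1 + k)) = block_mx x%:M 0 0 G'.
  apply: (etrans (esym (submxK (M : 'M_(1 + k))))); congr block_mx.
  - apply/matrixP => i j; rewrite !mxE (ord1 i) (ord1 j).
    have -> : lshift k (0 : 'I_1) = (0 : 'I_k.+1) by apply: val_inj.
    by rewrite hMentry eqxx mulr1.
  - apply/matrixP => i j; rewrite !mxE (ord1 i).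
    have -> : lshift k (0 : 'I_1) = (0 : 'I_k.+1) by apply: val_inj.
    by rewrite hMentry mulr_natr.
  - apply/matrixP => i j; rewrite !mxE (ord1 j) -hM mxE.
    have -> : lshift k (0 : 'I_1) = (0 : 'I_k.+1) by apply: val_inj.
    by rewrite hMentry mulr_natr.
have hG' : G'^T = G' by rewrite /G' trmx_drsub hM.
have hcG' : char_poly G' = \prod_(y <- lam') ('X - y%:P).
  have : char_poly (block_mx (x%:M : 'M_1) 0 0 G') = char_poly G.
    by rewrite -hMblock; exact: hcM.
  rewrite char_poly_block hc big_cons; apply: mulfI.
  by rewrite polyXsubC_eq0.
have [Q' [hQ'o hQ'd]] := IH G' lam' hG' hs hcG'.
pose B : 'M[R]_(1 + k) := block_mx 1%:M 0 0 Q'.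
have hBo : B^T *m B = 1%:M.
  rewrite /B tr_block_mx !trmx0 trmx1 mulmx_block.
  rewrite !mulmx0 !mul0mx !mulmx1 !addr0 !add0r hQ'o.
  by rewrite -scalar_mx_block.
have hBM : B^T *m block_mx x%:M 0 0 G' *m B = block_mx x%:M 0 0 (diag_mx (\row_i lam'`_i)).
  rewrite /B tr_block_mx !trmx0 trmx1 mulmx_block.
  rewrite ?mulmx0 ?mul0mx ?mulmx1 ?mul1mx ?addr0 ?add0r mulmx_block.
  by rewrite ?mulmx0 ?mul0mx ?mulmx1 ?mul1mx ?addr0 ?add0r hQ'd.
have hdiag : diag_mx (\row_i (x :: lam')`_i) = block_mx x%:M 0 0 (diag_mx (\row_i lam'`_i)) :> 'M[R]_(1 + k).
  have -> : (x%:M : 'M_1) = diag_mx (\row_(i < 1) x).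
    by apply/matrixP => i j; rewrite !mxE (ord1 i) (ord1 j).
  rewrite -diag_mx_row; congr diag_mx; apply/rowP => i; rewrite !mxE.
  case: splitP => j hj; rewrite !mxE hj //.
  by rewrite (ord1 j).
exists (H *m B); split.
- rewrite trmx_mul hHT mulmxA -[_ *m H *m H]mulmxA hHH mulmx1.
  exact: hBo.
- rewrite trmx_mul hHT -!mulmxA [H *m (G *m _)]mulmxA [H *m G *m _]mulmxA -hMdef.
  by rewrite mulmxA hdiag -hBM hMblock.
Qed.


Lemma norm2sqE (R : rcfType) k (v : 'cV[R]_k) : norm2sq v = (v^T *m v) 0 0.
Proof. by rewrite /norm2sq mxE; apply: eq_bigr => j _; rewrite mxE expr2. Qed.

Theorem theorem2 (R : rcfType) (n m : nat)
  (hm : (1 <= m)%N) (hmn : (m < n)%N) (h2m : (2 * m <= n)%N)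
  (S : pred R) (f : R -> 'cV[R]_n)
  (U1 : 'M[R]_(n, m)) (U2 : 'M[R]_(n, n - m))
  (hU : orthogonal_mx (row_mx U1 U2))
  (hrange : forall mu, mu \in S -> ((f mu)^T <= (row_mx U1 U2)^T)%MS)
  (P : 'M[R]_(n, m)) (hP : selection_op P)
  (hinv : P^T *m U1 \in unitmx)
  (sigma : seq R) (hsigma : singvals_desc (P^T *m U1) sigma)
  (N : nat) (mus : 'I_N -> R) (hmus : forall i, mus i \in S)
  (lam : seq R)
  (hlam : eigvals_desc
            (let X := U2^T *m (\matrix_(k, i) f (mus i) k 0 : 'M[R]_(n, N)) in
             X *m X^T) lam) :
  let fi := fun i => f (mus i) in
  let ftilde := fun i => U1 *m invmx (P^T *m U1) *m P^T *m fi i in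
  let fhat := fun i => U1 *m U1^T *m fi i in
  N%:R^-1 * \sum_(i < N) norm2sq (ftilde i - fhat i)
  <= N%:R^-1 * \sum_(i < m) ((sigma`_(m - 1 - i)) ^- 2 - 1) * lam`_i.
Proof.
cbv zeta.
case: hU => hU1 hU2.
have hUU : U1 *m U1^T + U2 *m U2^T = 1%:M by rewrite -hU2 tr_row_mx mul_row_col.
have hU1U1 : U1^T *m U1 = 1%:M.
  move: hU1; rewrite tr_row_mx mul_col_row (scalar_mx_block m (n - m)).
  by case/eq_block_mx.
have hPP : P^T *m P = 1%:M.
  case: hP => s [sinj ->]; apply/matrixP => i j; rewrite !mxE.
  rewrite (bigD1 (s i)) //= big1 => [|l hl]; last first.
    by rewrite !mxE (negbTE hl) mul0r.
  rewrite !mxE eqxx mul1r addr0 (inj_eq sinj).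
  by case: (i == j).
set A := P^T *m U1 in hinv hsigma *.
set B := P^T *m U2.
have hAB : A *m A^T + B *m B^T = 1%:M.
  rewrite /A /B !trmx_mul !trmxK !mulmxA -!mulmxA -mulmxDr.
  by rewrite !mulmxA -mulmxDl hUU mul1mx hPP.
set W := invmx A *m B.
set F := \matrix_(k, i) f (mus i) k 0 : 'M[R]_(n, N).
set X := U2^T *m F.
have key1 : U1 *m invmx A *m P^T = U1 *m U1^T + U1 *m W *m U2^T.
  rewrite -[P^T]mulmx1 -hUU mulmxDr !mulmxA mulmxDr; congr (_ + _).
    rewrite !mulmxA -[U1 *m invmx A *m P^T *m U1]mulmxA -[U1 *m invmx A *m (P^T *m U1)]mulmxA.
    have -> : invmx A *m (P^T *m U1) = 1%:M by exact: mulVmx.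
    by rewrite mulmx1.
  by rewrite !mulmxA.
have hdiff : forall i, U1 *m invmx A *m P^T *m f (mus i) - U1 *m U1^T *m f (mus i)
    = U1 *m col i (W *m X).
  move=> i; rewrite key1 mulmxDl addrC addKr.
  have -> : col i (W *m X) = W *m (U2^T *m f (mus i)).
    rewrite /X colE -!mulmxA -colE.
    suff -> : col i F = f (mus i) by [].
    by apply/matrixP => a b; rewrite !mxE (ord1 b).
  by rewrite !mulmxA.
have hsum : \sum_(i < N) norm2sq (U1 *m invmx A *m P^T *m f (mus i) - U1 *m U1^T *m f (mus i))
    = \tr ((W *m X) *m (W *m X)^T).
  transitivity (\sum_(i < N) \sum_(j < m) (W *m X) j i ^+ 2).
    apply: eq_bigr => i _.
    rewrite hdiff norm2sqE trmx_mul mulmxA -[_ *m U1^T *m U1]mulmxA hU1U1 mulmx1 mxE.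
    by apply: eq_bigr => j _; rewrite !mxE expr2.
  rewrite /mxtrace exchange_big /=; apply: eq_bigr => j _; rewrite mxE.
  by apply: eq_bigr => i _; rewrite [_^T _ _]mxE expr2.
rewrite hsum.
have hl : eigvals_desc (X *m X^T) lam := hlam.
case: hl => hlsz [hlsort hlcp].
clearbody X.
case: hsigma => hssz [hssort [hsnn hscp]].
have hGs : (X *m X^T)^T = X *m X^T by rewrite trmx_mul trmxK.
have [Q [hQo hQd]] := spectral hGs hlsz hlcp.
pose lst := [seq s ^+ 2 | s <- rev sigma].
have hKs : (A^T *m A)^T = A^T *m A by rewrite trmx_mul trmxK.
have hlstsz : size lst = m by rewrite size_map size_rev.
have hlstcp : char_poly (A^T *m A) = \prod_(x <- lst) ('X - x%:P).
  by rewrite hscp big_map big_rev.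
have [V [hVo hVd]] := spectral hKs hlstsz hlstcp.
have hQo' : Q *m Q^T = 1%:M := mulmx1C hQo.
have hVo' : V *m V^T = 1%:M := mulmx1C hVo.
set rs := rev sigma.
have hrssz : size rs = m by rewrite size_rev.
have hlstE : forall j, (j < m)%N -> lst`_j = rs`_j ^+ 2.
  by move=> j hj; rewrite /lst (nth_map 0) // hrssz.
have hdA : \det A != 0 by rewrite -unitfE -unitmxE.
have hlst0 : forall j : 'I_m, lst`_j != 0.
  have hdD : \det (V^T *m (A^T *m A) *m V) != 0.
    have dV : \det V * \det V = 1 by rewrite -{1}det_tr -det_mulmx hVo det1.
    rewrite !det_mulmx !det_tr.
    have -> : \det V * (\det A * \det A) * \det V = \det A * \det A * (\det V * \det V) by ring.
    by rewrite dV mulr1 mulf_neq0.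
  move: hdD; rewrite hVd det_diag => /prodf_neq0 h j.
  by have := h j isT; rewrite mxE.
have hBB : B *m B^T = 1%:M - A *m A^T by rewrite -hAB addrC addKr.
have hAi : A^T *m (invmx A)^T = 1%:M by rewrite -trmx_mul mulVmx // trmx1.
have hiA : (invmx A)^T *m A^T = 1%:M by rewrite -trmx_mul mulmxV // trmx1.
have hWW : W *m W^T = invmx A *m (invmx A)^T - 1%:M.
  rewrite /W trmx_mul mulmxA -[invmx A *m B *m B^T]mulmxA hBB.
  rewrite mulmxBr mulmx1 mulmxBl; congr (_ - _).
  by rewrite [invmx A *m (A *m _)]mulmxA mulVmx // mul1mx hAi.
pose Dinv : 'M[R]_m := diag_mx (\row_j (lst`_j)^-1).
have hE : V^T *m (invmx A *m (invmx A)^T) *m V = Dinv.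
  have h1 : V^T *m (invmx A *m (invmx A)^T) *m V *m diag_mx (\row_i lst`_i) = 1%:M.
    rewrite -hVd !mulmxA -[_ *m V *m V^T]mulmxA hVo' mulmx1.
    rewrite -[_ *m (invmx A)^T *m A^T]mulmxA hiA mulmx1.
    rewrite -[V^T *m invmx A *m P^T *m U1]mulmxA -[V^T *m invmx A *m (P^T *m U1)]mulmxA.
    have -> : invmx A *m (P^T *m U1) = 1%:M by exact: mulVmx.
    by rewrite mulmx1 hVo.
  have h2 : diag_mx (\row_i lst`_i) *m Dinv = 1%:M.
    rewrite /Dinv mulmx_diag -diag_const_mx; congr diag_mx.
    by apply/rowP => j; rewrite !mxE mulfV.
  by rewrite -[LHS]mulmx1 -h2 mulmxA h1 mul1mx.
clearbody W.
pose e := fun j : nat => (rs`_j ^+ 2)^-1 - 1.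
pose Z := V^T *m W *m Q.
have hZ : Z *m Z^T = diag_mx (\row_j e j).
  rewrite /Z !trmx_mul trmxK !mulmxA -[V^T *m W *m Q *m Q^T]mulmxA hQo' mulmx1.
  rewrite -[V^T *m W *m W^T]mulmxA hWW mulmxBr mulmxBl mulmx1 hVo hE.
  apply/matrixP => i j; rewrite !mxE hlstE //.
  by case: eqP => _; rewrite ?mulr1n ?mulr0n ?subr0.
have hG : X *m X^T = Q *m diag_mx (\row_i lam`_i) *m Q^T.
  by rewrite -hQd !mulmxA hQo' mul1mx -mulmxA hQo' mulmx1.
have htr : \tr (W *m X *m (W *m X)^T) = \sum_(j < m) \sum_(k < n - m) Z j k ^+ 2 * lam`_k.
  rewrite trmx_mul mulmxA -[W *m X *m X^T]mulmxA hG.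
  have trV : forall Y : 'M[R]_m, \tr Y = \tr (V^T *m Y *m V).
    by move=> Y; rewrite mxtrace_mulC mulmxA hVo' mul1mx.
  rewrite trV.
  have -> : V^T *m (W *m (Q *m diag_mx (\row_i lam`_i) *m Q^T) *m W^T) *m V
      = Z *m diag_mx (\row_i lam`_i) *m Z^T.
    by rewrite /Z !trmx_mul trmxK !mulmxA.
  rewrite /mxtrace; apply: eq_bigr => j _; rewrite mxE; apply: eq_bigr => k _.
  by rewrite mul_mx_diag !mxE; ring.
rewrite htr.
rewrite ler_wpM2l ?invr_ge0 ?ler0n //.
have -> : \sum_(i < m) (sigma`_(m - 1 - i) ^- 2 - 1) * lam`_i = \sum_(i < m) e i * lam`_i.
  apply: eq_bigr => i _; rewrite /e /rs nth_rev hssz ?ltn_ord //.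
  by rewrite -subnDA add1n.
have hrs : sorted <=%R rs by rewrite /rs rev_sorted.
have hrsle : forall i j, (i <= j < m)%N -> rs`_i <= rs`_j.
  move=> i j /andP[hij hjm].
  apply: (sorted_leq_nth le_trans lexx 0 hrs); rewrite /in_mem /= ?hrssz //.
  exact: leq_ltn_trans hij hjm.
have hrspos : forall i, (i < m)%N -> 0 < rs`_i.
  move=> i hi; rewrite lt_def; apply/andP; split.
    have := hlst0 (Ordinal hi); rewrite /= hlstE //.
    by apply: contraNneq => ->; rewrite expr0n.
  have : all (fun s => 0 <= s) rs by rewrite /rs all_rev.
  by move/all_nthP => /(_ 0 i); rewrite hrssz => ->.
apply: key.
- lia.
- exact: hZ.
- move=> i j hij; have /andP[hij' hjm] := hij.
  have hi : (i < m)%N := leq_ltn_trans hij' hjm.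
  rewrite /e lerD2r lef_pV2 ?posrE ?exprn_gt0 ?hrspos //.
  have := hrsle i j hij; have := hrspos i hi; nra.
- move=> i j /andP[hij hjm].
  apply: (sorted_leq_nth (fun a b c h1 h2 => le_trans h2 h1) lexx 0 hlsort); rewrite /in_mem /= ?hlsz //.
  exact: leq_ltn_trans hij hjm.
- move=> k hk.
  have := congr1 (fun M : 'M[R]_(n - m) => M (Ordinal hk) (Ordinal hk)) hQd.
  rewrite /= [in RHS]mxE [in RHS]mxE eqxx mulr1n => <-.
  have -> : Q^T *m (X *m X^T) *m Q = (X^T *m Q)^T *m (X^T *m Q).
    by rewrite trmx_mul trmxK !mulmxA.
  rewrite mxE; apply: sumr_ge0 => i _; rewrite mxE -expr2; exact: sqr_ge0.
Qed.
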